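(* Let $V$ be a finite-dimensional vector space over $\mathbb{F}_q$ and $\xi:\mathbb{F}_q^{\nu_1}\to V$ a surjective linear map, where $\mathbb{F}_q^{\nu_1}$ carries the Hamming weight. Then there exist an integer $\nu_2\le\nu_1$ and a surjective linear map $\varphi:\mathbb{F}_q^{\nu_2}\to V$ (with $\mathbb{F}_q^{\nu_2}$ carrying the Hamming weight) such that $\operatorname{wt}_{\mathrm{quot},\xi}=\operatorname{wt}_{\mathrm{quot},\varphi}$ on $V$, and $\varphi$ is a parent function, i.e. the vectors $\varphi(e_1),\dots,\varphi(e_{\nu_2})$ are pairwise linearly independent, and $d_H(\ker\varphi)\ge3$.
   Context: For a surjective linear map $\psi:(X,\operatorname{wt}_X)\to Y$, the quotient weight is $\operatorname{wt}_{\mathrm{quot},\psi}(y)=\min\{\operatorname{wt}_X(x):x\in\psi^{-1}(y)\}$. $e_i$ denote standard basis vectors. $d_H(C)$ is the minimum Hamming distance between distinct elements of a code $C$. *)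

(* Defs.v *)
From HB Require Import structures.
From mathcomp Require Import all_boot all_order all_algebra.
Set Implicit Arguments. Unset Strict Implicit. Unset Printing Implicit Defensive.
Import GRing.Theory.
Local Open Scope ring_scope.

Definition hwt (F : finFieldType) (n : nat) (x : 'rV[F]_n) : nat :=
  #|[set i : 'I_n | x ord0 i != 0]|.

(* Quotient weight wt_{quot,psi}(y) = min { hwt x : psi x = y }.
   The default value n (maximal possible weight) is only returned when the
   preimage is empty, which never happens for surjective psi. *)
Definition quot_wt (F : finFieldType) (V : vectType F) (n : nat)
    (psi : 'rV[F]_n -> V) (y : V) : nat :=
  \big[minn/n]_(x : 'rV[F]_n | psi x == y) hwt x.

Definition std_e {F : finFieldType} {n : nat} (i : 'I_n) : 'rV[F]_n :=
  delta_mx ord0 i.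

Definition min_dist_ge (F : finFieldType) (n : nat) (C : pred 'rV[F]_n) (d : nat) : Prop :=
  forall x y, C x -> C y -> x != y -> (d <= hwt (x - y))%N.

Definition parent_function (F : finFieldType) (V : vectType F) (n : nat)
    (phi : 'rV[F]_n -> V) : Prop :=
  (forall i j : 'I_n, i != j -> free [:: phi (std_e i); phi (std_e j)]) /\
  min_dist_ge [pred x | phi x == 0] 3.

(* Main.v *)
Require Import Defs.
From HB Require Import structures.
From mathcomp Require Import all_boot all_order all_algebra.
Set Implicit Arguments. Unset Strict Implicit. Unset Printing Implicit Defensive.
Import GRing.Theory.
Local Open Scope ring_scope.

Section S.
Variables (F : finFieldType) (V : vectType F).

Lemma hwt_le n (x : 'rV[F]_n) : (hwt x <= n)%N.
Proof. by rewrite /hwt; apply: leq_trans (max_card _) _; rewrite card_ord. Qed.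


Lemma bigmin_le_mem (I : eqType) (r : seq I) (P : pred I) (f : I -> nat) d y :
  y \in r -> P y -> (\big[minn/d]_(i <- r | P i) f i <= f y)%N.
Proof.
elim: r => // a r IH; rewrite inE big_cons => /orP [/eqP <-|yr] Py.
  by rewrite Py geq_minl.
case: (P a); last exact: IH.
exact: leq_trans (geq_minr _ _) (IH yr Py).
Qed.

Lemma quot_wt_le n (psi : 'rV[F]_n -> V) v y : psi y = v -> (quot_wt psi v <= hwt y)%N.
Proof.
move=> <-; rewrite /quot_wt; apply: bigmin_le_mem => //; exact: mem_index_enum.
Qed.

Lemma quot_wt_att n (psi : 'rV[F]_n -> V) v : (exists y, psi y = v) ->
  exists y, psi y = v /\ quot_wt psi v = hwt y.
Proof.
case=> y0 Hy0.
have : quot_wt psi v = n \/ exists y, psi y = v /\ quot_wt psi v = hwt y.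
  rewrite /quot_wt; apply: (big_ind (fun t => t = n \/ exists y, psi y = v /\ t = hwt y)).
  - by left.
  - by move=> a b Ha Hb; rewrite /minn; case: ifP.
  - by move=> y /eqP Hy; right; exists y.
case=> // H; exists y0; split => //; apply/eqP; rewrite eqn_leq quot_wt_le //=.
by rewrite H hwt_le.
Qed.


Lemma quot_wt_leq n1 n2 (p1 : 'rV[F]_n1 -> V) (p2 : 'rV[F]_n2 -> V) v :
  (exists y, p2 y = v) ->
  (forall y, p2 y = v -> exists x, p1 x = v /\ (hwt x <= hwt y)%N) ->
  (quot_wt p1 v <= quot_wt p2 v)%N.
Proof.
move=> /quot_wt_att [y [Hy ->]] H; have [x [Hx le]] := H y Hy.
exact: leq_trans (quot_wt_le Hx) le.
Qed.


Definition supp n (x : 'rV[F]_n) := [set i : 'I_n | x ord0 i != 0].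

Definition insM n (k : 'I_n.+1) : 'M[F]_(n, n.+1) :=
  \matrix_(j, i) (i == lift k j)%:R.

Lemma ins_lift n (k : 'I_n.+1) (y : 'rV[F]_n) j : (y *m insM k) 0 (lift k j) = y 0 j.
Proof.
rewrite mxE (bigD1 j) //= big1 ?addr0 => [|j' nj]; rewrite mxE ?eqxx ?mulr1 //.
by rewrite (inj_eq lift_inj) eq_sym (negbTE nj) mulr0.
Qed.

Lemma ins_k n (k : 'I_n.+1) (y : 'rV[F]_n) : (y *m insM k) 0 k = 0.
Proof.
rewrite mxE big1 // => j _; rewrite mxE.
by rewrite (negbTE (neq_lift k j)) mulr0.
Qed.

Lemma hwt_ins n (k : 'I_n.+1) (y : 'rV[F]_n) : hwt (y *m insM k) = hwt y.
Proof.
rewrite /hwt -(card_imset _ (@lift_inj _ k)); apply: eq_card => i.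
case: (unliftP k i) => [j ->|->].
  by rewrite mem_imset ?inE ?ins_lift //; exact: lift_inj.
rewrite inE ins_k eqxx /=; apply/esym/negbTE/imsetP => -[j _ /eqP].
by rewrite (negbTE (neq_lift k j)).
Qed.

Lemma ins_col' n (k : 'I_n.+1) (x : 'rV[F]_n.+1) : x 0 k = 0 -> col' k x *m insM k = x.
Proof.
move=> xk; apply/rowP => i; case: (unliftP k i) => [j ->|->].
  by rewrite ins_lift mxE.
by rewrite ins_k xk.
Qed.

Lemma std_eE n (j i : 'I_n) : (std_e j : 'rV[F]_n) 0 i = (i == j)%:R.
Proof. by rewrite /std_e mxE eqxx. Qed.

Section Step.
Variables (n : nat) (xi : {linear 'rV[F]_n.+1 -> V}) (k : 'I_n.+1) (w : 'rV[F]_n.+1).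
Hypotheses (wk : w 0 k = 0) (hw : (hwt w <= 1)%N) (xw : xi w = xi (std_e k)).

Let phi : {linear 'rV[F]_n -> V} := xi \o mulmxr (insM k).

Lemma reduce x : exists y, phi y = xi x /\ (hwt y <= hwt x)%N.
Proof.
pose x2 := x + x 0 k *: (w - std_e k).
have x2k : x2 0 k = 0.
  by rewrite !mxE wk eqxx /= sub0r mulrN1 subrr.
have ex2 : xi x2 = xi x by rewrite linearD linearZ linearB /= xw subrr scaler0 addr0.
exists (col' k x2); split.
  by rewrite /phi /= ins_col'.
rewrite -(hwt_ins k) ins_col' //.
have [xk0|xk0] := eqVneq (x 0 k) 0.
  by rewrite /x2 xk0 scale0r addr0.
have sub : supp x2 \subset (supp x :\ k) :|: supp w.
  apply/subsetP => i; rewrite !inE.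
  have [->|nik] := eqVneq i k; first by rewrite x2k eqxx.
  rewrite /= !mxE eqxx /= (negbTE nik) subr0.
  apply: contraR; rewrite negb_or !negbK => /andP [/eqP -> /eqP ->].
  by rewrite mulr0 addr0.
rewrite /hwt -/(supp x2) -/(supp x).
apply: leq_trans (subset_leq_card sub) _.
apply: leq_trans (leq_card_setU _ _).1 _.
rewrite (cardsD1 k (supp x)) inE xk0 /= addnC leq_add2r.
exact: hw.
Qed.
Lemma step_all : (forall v, exists x, xi x = v) ->
  exists phi : {linear 'rV[F]_n -> V},
    (forall v, exists y, phi y = v) /\ (forall v, quot_wt xi v = quot_wt phi v).
Proof.
move=> sx.
have sp : forall v, exists y, phi y = v.
  by move=> v; have [x <-] := sx v; have [y [<- _]] := reduce x; exists y.
exists phi; split => // v; apply/anti_leq/andP; split; apply: quot_wt_leq => //.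
  move=> y <-; exists (y *m insM k); split; first by [].
  by rewrite hwt_ins.
by move=> x <-; exact: reduce.
Qed.
End Step.

Lemma parent_noreduce n (xi : {linear 'rV[F]_n -> V}) :
  (forall k (w : 'rV[F]_n), w 0 k = 0 -> (hwt w <= 1)%N -> xi w = xi (std_e k) -> False) ->
  parent_function xi.
Proof.
move=> H; split.
  move=> i j nij; rewrite free_cons seq1_free span_seq1; apply/andP; split.
    apply/vlineP => -[a ea]; apply: (H i (a *: std_e j)).
    - by rewrite !mxE (negbTE nij) andbF mulr0.
    - rewrite /hwt; apply: (@leq_trans #|[set j]|); last by rewrite cards1.
    apply: subset_leq_card.
      apply/subsetP => l; rewrite !inE !mxE; apply: contraR => nlj.
      by rewrite (negbTE nlj) andbF mulr0.
    - by rewrite linearZ ea.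
  apply/eqP => cj; apply: (H j 0).
  - by rewrite mxE.
  - rewrite /hwt; apply: (@leq_trans #|[set j]|); last by rewrite cards1.
    apply: subset_leq_card.
    by apply/subsetP => l; rewrite !inE mxE eqxx.
  - by rewrite linear0 cj.
move=> x y /= /eqP hx /eqP hy nxy; set z := x - y.
have xz : xi z = 0 by rewrite linearB /= hx hy subrr.
have nz : z != 0 by rewrite subr_eq0.
clearbody z.
rewrite leqNgt; apply/negP => hz.
have : supp z != set0.
  apply: contra nz => /eqP s0; apply/eqP/rowP => i.
  have : i \notin supp z by rewrite s0 inE.
  by rewrite inE negbK mxE => /eqP.
case/set0Pn => k; rewrite inE => zk.
pose w := - (z 0 k)^-1 *: (z - z 0 k *: std_e k).
apply: (H k w).
- by rewrite !mxE !eqxx /= mulr1 subrr mulr0.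
- rewrite /hwt; apply: (@leq_trans #|supp z :\ k|).
    apply: subset_leq_card; apply/subsetP => l; rewrite !inE !mxE.
    have [->|nlk] := eqVneq l k; first by rewrite eqxx /= mulr1 subrr mulr0 eqxx.
    by rewrite mulr0 subr0 mulf_eq0 negb_or => /andP [_ ->].
  move: hz; rewrite /hwt -/(supp z) (cardsD1 k) inE zk.
  by rewrite ltnS add1n ltnS.
- rewrite linearZ linearB linearZ /= xz sub0r scalerN scaleNr opprK scalerA.
  by rewrite mulVf ?scale1r.
Qed.
End S.

From Stdlib Require Import Classical.

Theorem corollary4p1 (F : finFieldType) (V : vectType F) (n1 : nat)
    (xi : {linear 'rV[F]_n1 -> V})
    (xi_surj : forall v : V, exists x, xi x = v) :
  exists (n2 : nat) (phi : {linear 'rV[F]_n2 -> V}),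
    [/\ (n2 <= n1)%N,
        (forall v : V, exists x, phi x = v),
        (forall v : V, quot_wt xi v = quot_wt phi v)
      & parent_function phi].
Proof.
elim: n1 xi xi_surj => [|n IH] xi xs.
  exists 0%N, xi; split => //; apply: parent_noreduce => k; case: k => //.
case: (classic (exists k (w : 'rV[F]_n.+1), [/\ w 0 k = 0, (hwt w <= 1)%N & xi w = xi (std_e k)])).
  case=> k [w [wk hw xw]].
  have [phi [sp qp]] := step_all wk hw xw xs.
  have [n2 [psi [le sps qps pps]]] := IH phi sp.
  exists n2, psi; split => //; first exact: leqW.
  by move=> v; rewrite qp qps.
move=> H; exists n.+1, xi; split => //.
apply: parent_noreduce => k w wk hw xw; by apply: H; exists k, w; split.
Qed.
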